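(* Let $K$ be an algebraically closed field and $m>1$. If $a,b$ are endomorphisms of $K^m$ whose commutator $c=ab-ba$ has rank at most one, then $a$ and $b$ have a common invariant subspace $U$ with $0\ne U\ne K^m$. *)

(* Defs.v *)
From HB Require Import structures.
From mathcomp Require Import all_boot all_order all_algebra.
Set Implicit Arguments. Unset Strict Implicit. Unset Printing Implicit Defensive.

(* Main.v *)
Require Import Defs.
From HB Require Import structures.
From mathcomp Require Import all_boot all_order all_algebra.
From mathcomp Require Import zify.
Import GRing.Theory.
Local Open Scope ring_scope.

Lemma ex_eig (K : closedFieldType) (m : nat) (hm : (0 < m)%N) (x : 'M[K]_m) :
  exists l, (0 < \rank (kermx (x - l%:M)))%N.
Proof.
have : size (char_poly x) != 1%N by rewrite size_char_poly; case: m hm {x}.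
case/closed_rootP => l; rewrite -eigenvalue_root_char /eigenvalue /eigenspace.
by move=> H; exists l; rewrite lt0n mxrank_eq0.
Qed.

Lemma stab_shift (K : fieldType) (m : nat) (U x : 'M[K]_m) l :
  stablemx U (x - l%:M) -> stablemx U x.
Proof.
move=> h; have -> : x = (x - l%:M) + l%:M by rewrite subrK.
by apply: stablemxD => //; apply: stablemxC.
Qed.

Lemma ker_rank (K : fieldType) (m : nat) (y : 'M[K]_m) :
  (0 < \rank (kermx y))%N -> y != 0 ->
  (0 < \rank (kermx y))%N /\ (\rank (kermx y) < m)%N.
Proof.
move=> h1 h2; split => //; rewrite mxrank_ker.
have : (0 < \rank y)%N by rewrite lt0n mxrank_eq0.
have := rank_leq_row y; lia.
Qed.

Theorem lemma2p1 (K : closedFieldType) (m : nat) (hm : (1 < m)%N)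
  (a b : 'M[K]_m) (hc : (\rank (a *m b - b *m a)%R <= 1)%N) :
  exists U : 'M[K]_m,
    [/\ stablemx U a, stablemx U b, (0 < \rank U)%N & (\rank U < m)%N].
Proof.
have hm0 : (0 < m)%N by apply: ltnW.
have [l hl] := ex_eig _ _ hm0 a.
set a' := a - l%:M in hl.
have [a0|anz] := eqVneq a' 0.
  have ea : a = l%:M by apply/eqP; rewrite -subr_eq0 -/a' a0.
  have [mu hmu] := ex_eig _ _ hm0 b.
  set b' := b - mu%:M in hmu.
  have [b0|bnz] := eqVneq b' 0.
    have eb : b = mu%:M by apply/eqP; rewrite -subr_eq0 -/b' b0.
    exists (pid_mx 1); rewrite ea eb !stablemxC rank_pid_mx //; by [apply: ltnW|].
  have [h1 h2] := ker_rank _ _ _ hmu bnz.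
  exists (kermx b'); split => //; first by rewrite ea stablemxC.
  by apply: (stab_shift _ _ _ _ mu); apply: comm_mx_stable_ker.
have [h1 h2] := ker_rank _ _ _ hl anz.
have ha' : stablemx (kermx a') a by apply: (stab_shift _ _ _ _ l); apply: comm_mx_stable_ker.
have [hb|hb] := boolP (stablemx (kermx a') b).
  by exists (kermx a').
set c := a *m b - b *m a.
have hcc : c = a' *m b - b *m a'.
  by rewrite /c /a' mulmxBl mulmxBr scalar_mxC; rewrite opprB addrA subrK.
have : exists2 v : 'rV_m, (v <= kermx a')%MS & ~~ (v *m b <= kermx a')%MS.
  case/row_subPn: hb => i; rewrite row_mul => hi.
  by exists (row i (kermx a')); rewrite ?row_sub.
case=> v hv hvb.
have va : v *m a' = 0 by apply/sub_kermxP.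
have vc : v *m c = - (v *m b *m a').
  by rewrite hcc mulmxBr !mulmxA va mul0mx sub0r.
have vcnz : v *m c != 0.
  by rewrite vc oppr_eq0; apply: contra hvb => /eqP h; apply/sub_kermxP.
have vca : (v *m c <= a')%MS by rewrite vc eqmx_opp submxMl.
have cvc : (c <= v *m c)%MS.
  have := mxrank_leqif_sup (submxMl v c); case => _ <-.
  apply/eqP/anti_leq; rewrite rank_rV vcnz hc /= lt0n mxrank_eq0.
  rewrite andbT; apply/eqP => c0; move: vcnz; rewrite c0 mulmx0 eqxx.
  by [].
have ca : (c <= a')%MS by apply: submx_trans vca.
have ha'a' : stablemx a' a' by apply: submxMl.
exists a'; split.
- exact: (stab_shift _ _ _ _ _ ha'a').
- have -> : a' *m b = b *m a' + c by rewrite hcc addrC subrK.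
  by apply: addmx_sub => //; apply: submxMl.
- by rewrite lt0n mxrank_eq0.
- rewrite ltnNge; apply/negP => hr.
  have : (\rank (kermx a') <= 0)%N by rewrite mxrank_ker; have := rank_leq_row a'; lia.
  by rewrite leqNgt hl.
Qed.
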